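(* Let $p>5$ be a prime and consider the equation over $\mathbb{F}_p$ \[ x_1^2+x_2^2+x_3^2 - 3x_1x_2 = 0 \] (the case $a_1=a_2=0$, $a_3=-3$, $s=3+a_1+a_2+a_3=0$), with the maps $m_1:(x_1,x_2,x_3)\mapsto(-x_1+3x_2,x_2,x_3)$ and $m_2:(x_1,x_2,x_3)\mapsto(x_1,-x_2+3x_1,x_3)$. Let $\lambda = \frac{7+3\sqrt5}{2}\in\mathbb{F}_{p^2}$ (for either choice of $\sqrt5$) and let $\operatorname{ord}(\lambda)$ be its multiplicative order in $\mathbb{F}_{p^2}^\times$. Then: \begin{enumerate} \item the number of orbits of the group generated by $m_1,m_2$ acting on the set of solutions of the form $(x_1,x_2,1)$ is \[ \frac12\cdot\frac{p-1}{\operatorname{ord}(\lambda)} + 1 \ \text{ if } \sqrt5\in\mathbb{F}_p,\qquad \frac12\cdot\frac{p+1}{\operatorname{ord}(\lambda)} \ \text{ if } \sqrt5\notin\mathbb{F}_p; \] \item the number of orbits of the group generated by $m_1,m_2$ acting on the set of solutions of the form $(x_1,x_2,0)\neq(0,0,0)$ is $\frac{p-1}{\operatorname{ord}(\lambda)}$ if $\sqrt5\in\mathbb{F}_p$, and $0$ if $\sqrt5\notin\mathbb{F}_p$. \end{enumerate}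
   Context: $\lambda$ is an eigenvalue of the matrix of $m_1m_2$ acting on $(x_1,x_2)$, a root of $\lambda^2-7\lambda+1=0$; $\operatorname{ord}(\lambda)$ divides $\frac{p-1}{2}$ if $\lambda\in\mathbb{F}_p$ and $\frac{p+1}{2}$ otherwise. *)

(* Defs.v *)
From HB Require Import structures.
From mathcomp Require Import all_boot all_order all_algebra all_field.
Set Implicit Arguments. Unset Strict Implicit. Unset Printing Implicit Defensive.
Import GRing.Theory.
Local Open Scope ring_scope.

(* Points (x1, x2, x3) of F_p^3, encoded as ((x1, x2), x3). *)
Definition trip (p : nat) := ('F_p * 'F_p * 'F_p)%type.

Definition eqn (p : nat) (x : trip p) : 'F_p :=
  x.1.1 ^+ 2 + x.1.2 ^+ 2 + x.2 ^+ 2 - 3%:R * x.1.1 * x.1.2.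

Definition m1 (p : nat) (x : trip p) : trip p :=
  (- x.1.1 + 3%:R * x.1.2, x.1.2, x.2).
Definition m2 (p : nat) (x : trip p) : trip p :=
  (x.1.1, - x.1.2 + 3%:R * x.1.1, x.2).

Definition step (p : nat) : rel (trip p) :=
  fun x y => (y == m1 x) || (y == m2 x).

(* orbit of x under the group <m1, m2>; since m1, m2 are involutions,
   the group orbit is the set of points reachable by iterating m1, m2 *)
Definition orbit_of (p : nat) (x : trip p) : {set trip p} :=
  [set y | connect (@step p) x y].

Definition orbits (p : nat) (A : {set trip p}) : {set {set trip p}} :=
  [set orbit_of x | x in A].

Definition sols1 (p : nat) : {set trip p} :=
  [set x : trip p | (eqn x == 0) && (x.2 == 1)].

Definition sols0 (p : nat) : {set trip p} :=
  [set x : trip p | [&& eqn x == 0, x.2 == 0 & x != (0, 0, 0)]].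

(* Main.v *)
From HB Require Import structures.
From mathcomp Require Import all_boot all_order all_algebra all_field.
From mathcomp Require Import ring zify.
Require Import Defs.
Import GRing.Theory.
Local Open Scope ring_scope.

Fixpoint useq (R : pzRingType) (k : nat) : R :=
  match k with
  | 0%N => 0
  | 1%N => 1
  | (k'.+1 as k1).+1 => 7%:R * useq R k1 - useq R k'
  end.

Lemma useqSS (R : pzRingType) k : useq R k.+2 = 7%:R * useq R k.+1 - useq R k.
Proof. by []. Qed.
Arguments useq : simpl never.
Lemma useq0 (R : pzRingType) : useq R 0 = 0. Proof. by []. Qed.
Lemma useq1 (R : pzRingType) : useq R 1 = 1. Proof. by []. Qed.

Lemma useq_int (R : pzRingType) k : useq R k = (useq int k)%:~R.
Proof.
suff: useq R k = (useq int k)%:~R /\ useq R k.+1 = (useq int k.+1)%:~R by case.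
elim: k => [|k [IH1 IH2]]; first by split.
split=> //; rewrite !useqSS intrB intrM IH1 IH2; congr (_ * _ - _).
Qed.

Lemma cassini (R : comPzRingType) k :
  useq R k.+1 ^+ 2 - 7%:R * useq R k.+1 * useq R k + useq R k ^+ 2 = 1.
Proof.
elim: k => [|k IH]; first by rewrite /= expr1n mulr0 expr0n /= subr0 addr0.
by rewrite useqSS -[RHS]IH; ring.
Qed.

Lemma key_field (R : fieldType) (h2 : (2%:R : R) != 0) (h45 : (45%:R : R) != 0) k :
  let u1 := useq R k.+1 in let w := useq R k + 1 in
  u1 ^+ 2 - 7%:R * u1 * w + w ^+ 2 = 0 -> u1 = 0 /\ w = 0.
Proof.
move=> u1 w D.
have C := cassini R k.
have E1 : 2%:R * w - 7%:R * u1 = (u1 ^+ 2 - 7%:R * u1 * w + w ^+ 2)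
   - (useq R k.+1 ^+ 2 - 7%:R * useq R k.+1 * useq R k + useq R k ^+ 2) + 1.
  by rewrite /w /u1; ring.
rewrite D C sub0r addNr in E1.
have E2 : 45%:R * u1 ^+ 2 = (2%:R * w - 7%:R * u1) ^+ 2
             - 4%:R * (u1 ^+ 2 - 7%:R * u1 * w + w ^+ 2) by ring.
rewrite E1 D expr0n /= mulr0 subr0 in E2.
have U : u1 = 0.
  by move/eqP: E2; rewrite mulf_eq0 (negPf h45) /= expf_eq0 /= => /eqP.
split=> //; move: E1; rewrite U mulr0 subr0 => /eqP.
by rewrite mulf_eq0 (negPf h2) /= => /eqP.
Qed.

Lemma root_pow (R : comPzRingType) (mu : R) : mu ^+ 2 = 7%:R * mu - 1 ->
  forall k, mu ^+ k.+1 = useq R k.+1 * mu - useq R k.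
Proof.
move=> Hmu; elim=> [|k IH]; first by rewrite /= mul1r subr0 expr1.
rewrite exprS IH useqSS.
have -> : mu * (useq R k.+1 * mu - useq R k) = useq R k.+1 * mu ^+ 2 - useq R k * mu by ring.
rewrite Hmu; ring.
Qed.

Lemma root_one (R : fieldType) (h2 : (2%:R : R) != 0) (h45 : (45%:R : R) != 0)
  (mu : R) (Hmu : mu ^+ 2 = 7%:R * mu - 1) k :
  (mu ^+ k.+1 == 1) = (useq R k.+1 == 0) && (useq R k + 1 == 0).
Proof.
rewrite root_pow //; apply/eqP/andP => [E|[/eqP U /eqP W]].
  have W : useq R k + 1 = useq R k.+1 * mu by rewrite -E; ring.
  have D : useq R k.+1 ^+ 2 - 7%:R * useq R k.+1 * (useq R k + 1)
            + (useq R k + 1) ^+ 2 = useq R k.+1 ^+ 2 * (1 - 7%:R * mu + mu ^+ 2).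
    by rewrite W; ring.
  rewrite Hmu in D.
  have : useq R k.+1 ^+ 2 * (1 - 7%:R * mu + (7%:R * mu - 1)) = 0 by ring.
  rewrite -D => /(@key_field R h2 h45 k) [-> ->]; by rewrite !eqxx.
have -> : useq R k = -1 by rewrite -[useq R k](addrK 1) W sub0r.
by rewrite U mul0r sub0r opprK.
Qed.

Lemma intr_eq0_pchar (R : nzRingType) (p : nat) (chR : p \in [pchar R]) (z : int) :
  ((z%:~R : R) == 0) = (p %| `|z|)%N.
Proof.
case: z => m.
  by rewrite (dvdn_pcharf chR) /=.
by rewrite NegzE intrN oppr_eq0 /= (dvdn_pcharf chR).
Qed.

Lemma natr_neq0_pchar (R : nzRingType) (p : nat) (chR : p \in [pchar R]) (k : nat) :
  p \notin primes k -> (0 < k)%N -> (k%:R : R) != 0.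
Proof.
move=> hp k0; rewrite -(dvdn_pcharf chR); apply: contra hp => hd.
by rewrite mem_primes (pcharf_prime chR) k0.
Qed.
Arguments natr_neq0_pchar {R p} chR k.
Arguments intr_eq0_pchar {R p} chR z.

Section Iter.
Variable p : nat.
Hypothesis p_pr : prime p.
Hypothesis p_gt5 : (5 < p)%N.
Local Notation F := 'F_p.

Definition Mf (x : trip p) : trip p := m1 (m2 x).

Lemma iterM k (x : trip p) : iter k.+1 Mf x =
  (useq F k.+1 * (8%:R * x.1.1 - 3%:R * x.1.2) - useq F k * x.1.1,
   useq F k.+1 * (3%:R * x.1.1 - x.1.2) - useq F k * x.1.2, x.2).
Proof.
case: x => [[x1 x2] x3] /=.
elim: k => [|k IH].
  by rewrite /= /Mf /m1 /m2 /= useq0 useq1; congr (_, _, _); ring.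
rewrite iterS IH /Mf /m1 /m2 /= useqSS; congr (_, _, _); ring.
Qed.

Lemma intr_add1 (R : pzRingType) (z : int) : (z%:~R : R) + 1 = (z + 1)%:~R.
Proof. by rewrite intrD. Qed.

Lemma charF : p \in [pchar F]. Proof. exact: pchar_Fp. Qed.

Lemma pnot_small (k : nat) : (k <= 5)%N -> p \notin primes k.
Proof.
move=> hk; rewrite mem_primes; apply/negP => /and3P [_ k0 /dvdn_leq].
by move=> /(_ k0) hpk; move: p_gt5; rewrite ltnNge (leq_trans hpk hk).
Qed.

Lemma F2 : (2%:R : F) != 0.
Proof. by apply: (natr_neq0_pchar charF); [apply: pnot_small|]. Qed.
Lemma F3 : (3%:R : F) != 0.
Proof. by apply: (natr_neq0_pchar charF); [apply: pnot_small|]. Qed.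
Lemma F5 : (5%:R : F) != 0.
Proof. by apply: (natr_neq0_pchar charF); [apply: pnot_small|]. Qed.
Lemma F45 : (45%:R : F) != 0.
Proof.
have -> : (45%:R : F) = 3%:R * 3%:R * 5%:R by rewrite -!natrM.
by rewrite !mulf_neq0 ?F3 ?F5.
Qed.

Lemma Mper_F (x : trip p) k : x.1 != (0, 0) ->
  (iter k.+1 Mf x == x) = (useq F k.+1 == 0) && (useq F k + 1 == 0).
Proof.
case: x => [[x1 x2] x3] nz; rewrite iterM /=; rewrite /= in nz.
apply/eqP/andP => [[e1 e2]|[/eqP U /eqP W]]; last first.

  have -> : useq F k = -1 by rewrite -[useq F k](addrK 1) W sub0r.
  by rewrite U !mul0r !sub0r !mulN1r !opprK.
set u1 := useq F k.+1 in e1 e2 *; set u0 := useq F k in e1 e2 *.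
set D := u1 ^+ 2 - 7%:R * u1 * (u0 + 1) + (u0 + 1) ^+ 2.
have d1 : D * x1 = 0.
  transitivity ((- u1 - (u0 + 1)) * (u1 * (8%:R * x1 - 3%:R * x2) - u0 * x1 - x1)
      + 3%:R * u1 * (u1 * (3%:R * x1 - x2) - u0 * x2 - x2)); first by rewrite /D; ring.
  by rewrite e1 e2 !subrr !mulr0 addr0.
have d2 : D * x2 = 0.
  transitivity ((8%:R * u1 - (u0 + 1)) * (u1 * (3%:R * x1 - x2) - u0 * x2 - x2)
      - 3%:R * u1 * (u1 * (8%:R * x1 - 3%:R * x2) - u0 * x1 - x1)); first by rewrite /D; ring.
  by rewrite e1 e2 !subrr !mulr0 subr0.
have D0 : D = 0.
  apply/eqP; apply: contraR nz => nD.
  move/eqP: d1; rewrite mulf_eq0 (negPf nD) /= => /eqP ->.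
  by move/eqP: d2; rewrite mulf_eq0 (negPf nD) /= => /eqP ->.
by case: (@key_field F F2 F45 k D0) => /eqP A /eqP B; rewrite /u1 /u0 A B.
Qed.

Lemma M_nz (x : trip p) : ((Mf x).1 == (0, 0)) = (x.1 == (0, 0)).
Proof.
case: x => [[x1 x2] x3]; rewrite /Mf /m1 /m2 /=.
apply/eqP/eqP => [E|[-> ->]]; last by congr (_, _); ring.
have e1 : - x1 + 3%:R * (- x2 + 3%:R * x1) = 0 := congr1 fst E.
have e2 : - x2 + 3%:R * x1 = 0 := congr1 snd E.
have h1 : x1 = 0.
  transitivity (- (- x1 + 3%:R * (- x2 + 3%:R * x1)) + 3%:R * (- x2 + 3%:R * x1)); first ring.
  by rewrite e1 e2 mulr0 oppr0 addr0.
by move: e2; rewrite h1 mulr0 addr0 => /eqP; rewrite oppr_eq0 => /eqP ->.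
Qed.

Lemma iterM_nz k (x : trip p) : ((iter k Mf x).1 == (0, 0)) = (x.1 == (0, 0)).
Proof. by elim: k => //= k IH; rewrite M_nz. Qed.

Lemma iterM_0 k (x : trip p) : x.1 = (0, 0) -> iter k Mf x = x.
Proof.
case: x => [[x1 x2] x3] /= [-> ->]; elim: k => [|k IH]; first by [].
rewrite iterS IH.
rewrite /Mf /m1 /m2; simpl; by rewrite !(mulr0, oppr0, addr0).
Qed.

Variables (L : finFieldType) (charL : p \in [pchar L]) (r : L) (hr : r ^+ 2 = 5%:R)
  (n : nat) (ord_lambda : n.-primitive_root ((7%:R + 3%:R * r) / 2%:R)).

Lemma L2 : (2%:R : L) != 0.
Proof. by apply: (natr_neq0_pchar charL); [apply: pnot_small|]. Qed.
Lemma L45 : (45%:R : L) != 0.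
Proof.
have -> : (45%:R : L) = 3%:R * 3%:R * 5%:R by rewrite -!natrM.
by rewrite !mulf_neq0 // (natr_neq0_pchar charL) // pnot_small.
Qed.

Lemma lam_root : ((7%:R + 3%:R * r) / 2%:R) ^+ 2 = 7%:R * ((7%:R + 3%:R * r) / 2%:R) - 1.
Proof.
apply/eqP; rewrite -subr_eq0; apply/eqP.
have h2 := L2.
transitivity (9%:R / 4%:R * (r ^+ 2 - 5%:R)); first by field; rewrite -[4%:R]/(2 * 2)%:R natrM mulf_neq0.
by rewrite hr subrr mulr0.
Qed.

Lemma Mper (x : trip p) k : x.1 != (0, 0) -> (iter k Mf x == x) = (n %| k)%N.
Proof.
move=> nz; case: k => [|k]; first by rewrite eqxx dvdn0.
rewrite Mper_F //.
have -> : (n %| k.+1)%N = (((7%:R + 3%:R * r) / 2%:R) ^+ k.+1 == 1).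
  by rewrite -(expr0 ((7%:R + 3%:R * r) / 2%:R)) (eq_prim_root_expr ord_lambda) mod0n.
rewrite (@root_one L L2 L45 _ lam_root).
rewrite (useq_int L k.+1) (useq_int L k) (useq_int F k.+1) (useq_int F k).
by rewrite !intr_add1 !(intr_eq0_pchar charL) !(intr_eq0_pchar charF).
Qed.

End Iter.

Lemma sum_pairs (f : nat -> nat) n :
  (\sum_(i < n) (f i.*2 + f i.*2.+1) = \sum_(m < n.*2) f m)%N.
Proof.
elim: n => [|n IH]; first by rewrite !big_ord0.
rewrite big_ord_recr /= IH doubleS !big_ord_recr /= addnA.
by [].
Qed.

Lemma sum_eq1 n j : (j < n)%N -> (\sum_(m < n) (j == m %[mod n]) = 1)%N.
Proof.
move=> jn; rewrite (bigD1 (Ordinal jn)) //= eqxx big1 ?addn0 // => i /= ne.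
rewrite !modn_small //; case: eqP => // E; case/negP: ne.
by apply/eqP/val_inj; rewrite /= E.
Qed.

Lemma count2 n j : (j < n)%N ->
  (\sum_(i < n) ((n - i + j == i %[mod n]) + (n - i.+1 + j == i %[mod n])) = 2)%N.
Proof.
move=> jn.
have E : forall i : 'I_n, ((n - i + j == i %[mod n]) + (n - i.+1 + j == i %[mod n]))%N
   = ((j == i.*2 %[mod n]) + (j == i.*2.+1 %[mod n]))%N.
  move=> i; have ilt := ltn_ord i; congr (_ + _)%N.
    rewrite -(eqn_modDr i) (_ : (n - i + j + i = n + j)%N); last by lia.
    by rewrite modnDl -addnn.
  rewrite -(eqn_modDr i.+1) (_ : (n - i.+1 + j + i.+1 = n + j)%N); last by lia.
  by rewrite modnDl -addnn addnS.
rewrite (eq_bigr _ (fun i _ => E i)).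
rewrite (sum_pairs (fun m => (j == m %[mod n]) : nat)) -addnn big_split_ord /=.
rewrite sum_eq1 //; under eq_bigr do rewrite modnDl; by rewrite sum_eq1.
Qed.

Section Orbits.
Variables (p n : nat).
Hypothesis n_gt0 : (0 < n)%N.
Hypothesis Mper : forall x : trip p, x.1 != (0, 0) -> forall k, (iter k (@Mf p) x == x) = (n %| k)%N.
Local Notation Mf := (@Mf p).
Local Notation F := 'F_p.

Lemma m1K (x : trip p) : m1 (m1 x) = x.
Proof. by case: x => [[x1 x2] x3]; rewrite /m1 /=; congr (_, _, _); ring. Qed.
Lemma m2K (x : trip p) : m2 (m2 x) = x.
Proof. by case: x => [[x1 x2] x3]; rewrite /m2 /=; congr (_, _, _); ring. Qed.

Lemma step_sym : symmetric (@step p).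
Proof.
move=> x y; rewrite /step; congr (_ || _); apply/eqP/eqP => ->;
  by rewrite ?m1K ?m2K.
Qed.

Lemma iterMn (x : trip p) : iter n Mf x = x.
Proof.
case: (boolP (x.1 == (0, 0))) => [/eqP /iterM_0 //|nz].
by apply/eqP; rewrite Mper.
Qed.

Lemma iter_mod k (x : trip p) : iter k Mf x = iter (k %% n) Mf x.
Proof.
rewrite {1}(divn_eq k n) iterD.
elim: (k %/ n)%N => [|q IH] //; by rewrite mulSn iterD IH iterMn.
Qed.

Lemma aM (y : trip p) : m1 (Mf y) = m2 y.
Proof. by rewrite /Mf m1K. Qed.

Lemma MaM (z : trip p) : Mf (m1 (Mf z)) = m1 z.
Proof. by rewrite aM /Mf m2K. Qed.

Lemma a_iter k (y : trip p) : (k <= n)%N -> m1 (iter k Mf y) = iter (n - k) Mf (m1 y).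
Proof.
move=> kn.
have H : forall k, iter k Mf (m1 (iter k Mf y)) = m1 y.
  elim=> [|j IH] //; rewrite iterSr iterS.
  by rewrite MaM.
by rewrite -(H k) -iterD subnK // iterMn.
Qed.

Definition Morb (y : trip p) : {set trip p} := [set iter (val i) Mf y | i : 'I_n].

Lemma mem_Morb k y : iter k Mf y \in Morb y.
Proof. by rewrite iter_mod; apply/imsetP; exists (Ordinal (ltn_pmod k n_gt0)). Qed.

Lemma MorbP z y : reflect (exists2 k, (k < n)%N & z = iter k Mf y) (z \in Morb y).
Proof.
apply: (iffP imsetP) => [[i _ ->]|[k kn ->]]; first by exists i.
by exists (Ordinal kn).
Qed.

Lemma Morb_trans {y z w} : z \in Morb y -> w \in Morb z -> w \in Morb y.
Proof. by move=> /MorbP [k _ ->] /MorbP [j _ ->]; rewrite -iterD mem_Morb. Qed.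

Lemma Morb_sym {y z} : z \in Morb y -> y \in Morb z.
Proof.
move=> /MorbP [k kn ->]; rewrite -{1}(iterMn y) -(subnK (ltnW kn)) iterD.
exact: mem_Morb.
Qed.

Lemma a_Morb {y z} : z \in Morb y -> m1 z \in Morb (m1 y).
Proof. by move=> /MorbP [k kn ->]; rewrite a_iter ?(ltnW kn) // mem_Morb. Qed.

Lemma b_Morb {y z} : z \in Morb y -> m2 z \in Morb (m1 y).
Proof.
move=> zy; rewrite -aM; apply: a_Morb; apply: Morb_trans zy _.
exact: (mem_Morb 1).
Qed.

Lemma iter_inj (y : trip p) : y.1 != (0, 0) -> injective (fun i : 'I_n => iter i Mf y).
Proof.
move=> nz.
suff H : forall i j : 'I_n, (i <= j)%N -> iter i Mf y = iter j Mf y -> i = j.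
  by move=> i j E; case: (leqP i j) => [/H|/ltnW /H]; [apply|move=> H'; apply/esym/H'].
move=> i j ij E; apply/val_inj => /=.
have nz' : (iter i Mf y).1 != (0, 0) by rewrite iterM_nz.
move: (@Mper _ nz' (j - i)); rewrite -iterD subnK // -E eqxx => /esym D.
have : (j - i < n)%N by apply: leq_ltn_trans (leq_subr _ _) (ltn_ord j).
move=> lt; have := dvdn_leq; case: (posnP (j - i)) => [z _|pos /(_ _ _ pos D)].
  by apply/eqP; rewrite eqn_leq ij /= -subn_eq0 z.
by rewrite leqNgt lt.
Qed.

Lemma card_Morb y : y.1 != (0, 0) -> #|Morb y| = n.
Proof. by move=> nz; rewrite card_imset ?card_ord //; apply: iter_inj. Qed.

Lemma iter_eq (y : trip p) i j : y.1 != (0, 0) ->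
  (iter i Mf y == iter j Mf y) = (i == j %[mod n]).
Proof.
move=> nz; rewrite (iter_mod i) (iter_mod j).
apply/eqP/eqP => [E|->] //.
have := @iter_inj y nz (Ordinal (ltn_pmod i n_gt0)) (Ordinal (ltn_pmod j n_gt0)) E.
by case.
Qed.

Lemma m1_nz (x : trip p) : ((m1 x).1 == (0, 0)) = (x.1 == (0, 0)).
Proof.
case: x => [[x1 x2] x3]; rewrite /m1 /=.
apply/eqP/eqP => [E|[-> ->]]; last by congr (_, _); ring.
have e1 : - x1 + 3%:R * x2 = 0 := congr1 fst E.
have e2 : x2 = 0 := congr1 snd E.
by move: e1; rewrite e2 mulr0 addr0 => /eqP; rewrite oppr_eq0 => /eqP ->.
Qed.

Lemma orbit_ofE x : orbit_of x = Morb x :|: Morb (m1 x).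
Proof.
have fwd : forall u v, step u v -> u \in Morb x :|: Morb (m1 x) -> v \in Morb x :|: Morb (m1 x).
  move=> u v /orP [] /eqP -> /setUP [] H; apply/setUP.
  - by right; apply: a_Morb.
  - by left; rewrite -[x]m1K; apply: a_Morb.
  - by right; apply: b_Morb.
  - by left; rewrite -[x]m1K; apply: b_Morb.
have cl : closed (@step p) (mem (Morb x :|: Morb (m1 x))).
  move=> u v uv; apply/idP/idP; first exact: fwd.
  by apply: fwd; rewrite step_sym.
have reach : forall y k, connect (@step p) y (iter k Mf y).
  move=> y; elim=> [|k IH] //=; apply: connect_trans IH _.
  have s1 : @step p (iter k Mf y) (m2 (iter k Mf y)) by rewrite /step eqxx orbT.
  have s2 : @step p (m2 (iter k Mf y)) (m1 (m2 (iter k Mf y))) by rewrite /step eqxx.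
  exact: connect_trans (connect1 s1) (connect1 s2).
apply/setP => y; rewrite inE; apply/idP/idP => [H|].
  by rewrite -(closed_connect cl H); apply/setUP; left; exact: (mem_Morb 0 x).
case/setUP => /MorbP [k _ ->]; first exact: reach.
have s1 : @step p x (m1 x) by rewrite /step eqxx.
exact: connect_trans (connect1 s1) (reach _ _).
Qed.

Definition wgt (y : trip p) : nat := (2 + n * ((m1 y == y) + (m2 y == y)))%N.

Lemma orbit_weight x : x.1 != (0, 0) -> (\sum_(y in orbit_of x) wgt y = 4 * n)%N.
Proof.
move=> nz; rewrite orbit_ofE.
case: (boolP (m1 x \in Morb x)) => [ax|nax].
  have -> : Morb x :|: Morb (m1 x) = Morb x.
    apply/setUidPl/subsetP => z; exact: Morb_trans.
  rewrite big_imset /=; last by move=> i j _ _; apply: iter_inj.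
  case/MorbP: ax => j jn aj.
  rewrite big_split /= sum_nat_const card_ord -big_distrr /=.
  have E : forall i : 'I_n, ((m1 (iter i Mf x) == iter i Mf x) + (m2 (iter i Mf x) == iter i Mf x))%N
      = ((n - i + j == i %[mod n]) + (n - i.+1 + j == i %[mod n]))%N.
    move=> i; congr (_ + _)%N.
      by rewrite a_iter ?(ltnW (ltn_ord i)) // aj -iterD iter_eq.
    by rewrite -aM -iterS a_iter ?(ltn_ord i) // aj -iterD iter_eq.
  rewrite (eq_bigr _ (fun i _ => E i)) count2 //; lia.
have disj : Morb x :&: Morb (m1 x) = set0.
  apply/setP => z; rewrite in_setI in_set0; apply/negP => /andP [zx zax].
  by apply: (negP nax); apply: Morb_trans zx (Morb_sym zax).
have nofix : forall y, y \in Morb x :|: Morb (m1 x) -> wgt y = 2%N.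
  move=> y yO; rewrite /wgt.
  suff [-> ->] : (m1 y == y) = false /\ (m2 y == y) = false by rewrite muln0.
  case/setUP: yO => yO.
    split; apply/negP => /eqP E.
    - have H : y \in Morb (m1 x) by rewrite -{1}E; exact: a_Morb yO.
      by move/setP: disj => /(_ y); rewrite in_setI in_set0 yO H.
    - have H : y \in Morb (m1 x) by rewrite -{1}E; exact: b_Morb yO.
      by move/setP: disj => /(_ y); rewrite in_setI in_set0 yO H.
  have yx : forall w, w \in Morb (m1 (m1 x)) -> w \in Morb x by rewrite m1K.
  split; apply/negP => /eqP E.
  - have H : y \in Morb x by rewrite -{1}E; apply: yx; exact: a_Morb yO.
    by move/setP: disj => /(_ y); rewrite in_setI in_set0 yO H.
  - have H : y \in Morb x by rewrite -{1}E; apply: yx; exact: b_Morb yO.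
    by move/setP: disj => /(_ y); rewrite in_setI in_set0 yO H.
rewrite (eq_bigr _ nofix) sum_nat_const.
have := cardsUI (Morb x) (Morb (m1 x)).
rewrite disj cards0 addn0 !card_Morb ?m1_nz // => ->; lia.
Qed.

End Orbits.

Lemma sum_bool_card (T : finType) (S : {set T}) (P : pred T) :
  (\sum_(x in S) (P x : nat))%N = #|[set x in S | P x]|.
Proof.
rewrite -sum1_card big_mkcond [RHS]big_mkcond /=; apply: eq_bigr => x _.
by rewrite inE; case: (x \in S); case: (P x).
Qed.

Section Count.
Variables (p n : nat).
Hypothesis n_gt0 : (0 < n)%N.
Hypothesis Mper : forall x : trip p, x.1 != (0, 0) -> forall k, (iter k (@Mf p) x == x) = (n %| k)%N.

Lemma orbits_count (S : {set trip p})
  (Scl : forall x, x \in S -> (m1 x \in S) && (m2 x \in S))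
  (Snz : forall x, x \in S -> x.1 != (0, 0)) :
  (#|orbits S| * (4 * n) = 2 * #|S| + n * (#|[set x in S | m1 x == x]| + #|[set x in S | m2 x == x]|))%N.
Proof.
have csym : connect_sym (@step p) := sym_connect_sym (@step_sym p).
have cl : closed (@step p) (mem S).
  have fwd : forall u v, @step p u v -> u \in S -> v \in S.
    by move=> u v /orP [] /eqP -> /Scl /andP [].
  move=> u v uv; apply/idP/idP; first exact: fwd.
  by apply: fwd; rewrite step_sym.
have cov : cover (orbits S) = S.
  apply/setP => y; apply/bigcupP/idP => [[B /imsetP [x xS ->]]|yS].
    by rewrite inE => /(closed_connect cl) <-.
  by exists (orbit_of y); [apply: imset_f | rewrite inE connect0].
have triv : trivIset (orbits S).
  apply/trivIsetP => A B; rewrite /orbits => /imsetP [x xS ->] /imsetP [y yS ->] neq.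
  rewrite -setI_eq0; apply/eqP/setP => z; rewrite in_setI in_set0 !inE.
  apply/negP => /andP [xz yz]; case/eqP: neq.
  have xy : connect (@step p) x y by apply: connect_trans xz _; rewrite csym.
  by apply/setP => w; rewrite !inE (same_connect csym xy).
have H := @big_trivIset _ nat 0%N addn (orbits S) (@wgt p n) triv.
have E : (\sum_(A in orbits S) \sum_(x in A) wgt p n x = \sum_(A in orbits S) 4 * n)%N.
  apply: eq_bigr => A; rewrite /orbits => /imsetP [x xS ->].
  by apply: orbit_weight => //; exact: Snz.
rewrite /= cov E sum_nat_const in H; rewrite -H.
rewrite /wgt big_split sum_nat_const -big_distrr big_split /= !sum_bool_card.
by rewrite mulnC.
Qed.

End Count.

Section Points.
Variable p : nat.
Hypothesis p_pr : prime p.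
Hypothesis p_gt5 : (5 < p)%N.
Local Notation F := 'F_p.

Lemma cardF : #|F| = p. Proof. exact: card_Fp. Qed.

Lemma neg_neq (t : F) : t != 0 -> t != - t.
Proof.
move=> t0; apply: contra t0 => /eqP E.
have : 2%:R * t = 0 by rewrite mulr2n mulrDl mul1r {1}E addNr.
by move/eqP; rewrite mulf_eq0 (negPf (@F2 p p_pr p_gt5)) /=.
Qed.

Lemma card_sqrt (t : F) : #|[set a : F | a ^+ 2 == t ^+ 2]| = if t == 0 then 1%N else 2%N.
Proof.
have -> : [set a : F | a ^+ 2 == t ^+ 2] = [set t; - t].
  by apply/setP => a; rewrite !inE eqf_sqr.
rewrite cards2; have [->|t0] := eqVneq t 0; first by rewrite oppr0 eqxx.
by rewrite neg_neq.
Qed.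

Definition Sq : {set F} := [set a ^+ 2 | a : F].

Lemma card_Sq : (#|Sq|.*2 = p.+1)%N.
Proof.
have H : (\sum_(a in [set: F]) 1 = \sum_(j in Sq) \sum_(a in [set: F] | a ^+ 2 == j) 1)%N.
  rewrite (partition_big_imset (fun a : F => a ^+ 2)) /=.
  suff -> : [set a ^+ 2 | a in [set: F]] = Sq by [].
  by apply/setP => y; apply/imsetP/imsetP => [] [x _ ->]; exists x.
rewrite sum1_card cardsT cardF in H.
have E : forall j, j \in Sq -> (\sum_(a in [set: F] | a ^+ 2 == j) 1)%N = if j == 0 :> F then 1%N else 2%N.
  move=> j /imsetP [t _ ->].
  rewrite sum1dep_card expf_eq0 /= -(card_sqrt t).
  by apply: eq_card => a; rewrite !inE.
have S0 : (0 : F) \in Sq by apply/imsetP; exists 0; rewrite ?expr0n.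
rewrite (eq_bigr _ E) (bigD1 0) //= ?eqxx in H.
rewrite (eq_bigl (fun j => j \in Sq :\ 0)) in H; last by move=> j; rewrite !inE andbC.
rewrite (eq_bigr (fun _ => 2%N)) in H; last by move=> j; rewrite !inE => /andP [/negPf ->].
rewrite sum_nat_const in H.
rewrite (cardsD1 0 Sq) S0 /= add1n -muln2; move: H; move: #|Sq :\ 0| => k H; lia.
Qed.

Definition nrm (z : F * F) : F := z.1 ^+ 2 - 5%:R * z.2 ^+ 2.
Definition Nfib (c : F) : {set F * F} := [set z | nrm z == c].
Definition mulz (z w : F * F) : F * F := (z.1 * w.1 + 5%:R * z.2 * w.2, z.1 * w.2 + z.2 * w.1).

Lemma nrm_mul z w : nrm (mulz z w) = nrm z * nrm w.
Proof. by rewrite /nrm /mulz /=; ring. Qed.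

Lemma nrm_surj (c : F) : exists z, nrm z = c.
Proof.
pose B := [set c + 5%:R * y | y in Sq].
have cB : #|B| = #|Sq|.
  apply: card_imset => y1 y2 /addrI /eqP; rewrite -subr_eq0 -mulrBr mulf_eq0.
  by rewrite (negPf (@F5 p p_pr p_gt5)) /= subr_eq0 => /eqP.
have U : (#|Sq :|: B| <= #|F|)%N by apply: max_card.
rewrite cardF in U.
have := cardsUI Sq B; rewrite cB.
have := card_Sq.
case: (set_0Vmem (Sq :&: B)) => [->|[y]]; first by rewrite cards0; lia.
rewrite in_setI => /andP [/imsetP [a _ ->] /imsetP [y' /imsetP [b _ ->] E]] _ _.
by exists (a, b); rewrite /nrm /= E addrK.
Qed.

Lemma fib_eq (c : F) : c != 0 -> #|Nfib c| = #|Nfib 1|.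
Proof.
move=> c0; have [z0 Hz] := nrm_surj c; subst c.
pose zi := (z0.1 / nrm z0, - z0.2 / nrm z0).
have c1 := c0; rewrite /nrm in c1.
have K1 : forall w, mulz zi (mulz z0 w) = w.
  by move=> [w1 w2]; rewrite /mulz /zi /nrm /=; congr (_, _); field.
have K2 : forall w, mulz z0 (mulz zi w) = w.
  by move=> [w1 w2]; rewrite /mulz /zi /nrm /=; congr (_, _); field.
have nzi : nrm zi * nrm z0 = 1 by rewrite /zi /nrm /=; field.
have -> : Nfib (nrm z0) = [set mulz z0 w | w in Nfib 1].
  apply/setP => y; rewrite inE; apply/eqP/imsetP => [Hy|[w]].
    exists (mulz zi y); last by rewrite K2.
    by rewrite inE nrm_mul Hy nzi.
  by move=> + ->; rewrite inE nrm_mul => /eqP ->; rewrite mulr1.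
by apply: card_imset; apply: (can_inj K1).
Qed.

Lemma sum_fib : (\sum_(c : F) #|Nfib c| = #|F| * #|F|)%N.
Proof.
rewrite -card_prod -cardsT -sum1_card.
rewrite (partition_big nrm predT) //=; apply: eq_bigr => c _.
by rewrite -sum1_card; apply: eq_bigl => z; rewrite !inE.
Qed.

Lemma fib_total : (#|Nfib 0%R| + (p - 1) * #|Nfib 1%R| = p * p)%N.
Proof.
have := sum_fib; rewrite cardF => <-.
rewrite (bigD1 0) //=; congr (_ + _)%N.
rewrite (eq_bigr (fun _ => #|Nfib 1|)); last by move=> c /fib_eq.
rewrite sum_nat_cond_const; congr (_ * _)%N.
rewrite subn1; have := cardC1 (0 : F); rewrite cardF => <-.
by apply: eq_card => c; rewrite !inE.
Qed.

Lemma F5' : (5%:R : F) != 0. Proof. exact: (@F5 p p_pr p_gt5). Qed.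

Lemma N0_split (s : F) : s ^+ 2 = 5%:R -> #|Nfib 0| = (2 * p - 1)%N.
Proof.
move=> hs.
have s0 : s != 0 by apply: contra F5' => /eqP s0; rewrite -hs s0 expr0n.
pose A := [set (s * v, v) | v : F]; pose B := [set (- (s * v), v) | v : F].
have memA : forall u v, ((u, v) \in A) = (u == s * v).
  move=> u v; apply/imsetP/eqP => [[w _ [-> ->]]|->] //; by exists v.
have memB : forall u v, ((u, v) \in B) = (u == - (s * v)).
  move=> u v; apply/imsetP/eqP => [[w _ [-> ->]]|->] //; by exists v.
have E : Nfib 0 = A :|: B.
  apply/setP => [[u v]]; rewrite in_setU memA memB inE /nrm /= -eqf_sqr.
  by rewrite -hs -exprMn subr_eq0.
have I : A :&: B = [set (0, 0)].
  apply/setP => [[u v]]; rewrite in_setI memA memB inE.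
  apply/andP/eqP => [[/eqP e1 /eqP e2]|[-> ->]]; last by rewrite mulr0 oppr0 eqxx.
  have sv : s * v = 0.
    apply/eqP; apply: contraT => nz; move: (neg_neq (s * v) nz); by rewrite -{1}e1 -e2 eqxx.
  have v0 : v = 0 by move/eqP: sv; rewrite mulf_eq0 (negPf s0) => /eqP.
  by rewrite e1 sv v0.
have cA : #|A| = #|F| by rewrite card_imset // => v w [].
have cB : #|B| = #|F| by rewrite card_imset // => v w [].
rewrite cardF in cA cB.
have := cardsUI A B; rewrite I cards1 cA cB -E; move: #|Nfib 0| => k; lia.
Qed.

Lemma N0_nonsplit : ~ (exists s : F, s ^+ 2 = 5%:R) -> #|Nfib 0| = 1%N.
Proof.
move=> ns; suff -> : Nfib 0 = [set (0, 0)] by rewrite cards1.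
apply/setP => [[u v]]; rewrite !inE /nrm /=; apply/eqP/eqP => [E|[-> ->]]; last first.
  by rewrite expr0n mulr0 subr0.
have v0 : v = 0.
  apply/eqP; apply: contraT => nv; case: ns; exists (u / v).
  have U : u ^+ 2 = 5%:R * v ^+ 2 by apply/eqP; rewrite -subr_eq0 E.
  by rewrite expr_div_n U mulfK // expf_neq0.
move: E; rewrite v0 expr0n mulr0 subr0 => /eqP; rewrite expf_eq0 /= => /eqP ->.
by [].
Qed.

Lemma N1_split (s : F) : s ^+ 2 = 5%:R -> #|Nfib 1| = (p - 1)%N.
Proof.
move=> hs; have := fib_total; rewrite (N0_split s hs).
have p1 : (1 < p)%N by apply: prime_gt1.
move: #|Nfib 1| => k; nia.
Qed.

Lemma N1_nonsplit : ~ (exists s : F, s ^+ 2 = 5%:R) -> #|Nfib 1| = p.+1.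
Proof.
move=> ns; have := fib_total; rewrite (N0_nonsplit ns).
have p1 : (1 < p)%N by apply: prime_gt1.
move: #|Nfib 1| => k; nia.
Qed.

End Points.

Section Sets.
Variable p : nat.
Hypothesis p_pr : prime p.
Hypothesis p_gt5 : (5 < p)%N.
Local Notation F := 'F_p.

Let h2 : (2%:R : F) != 0 := @F2 p p_pr p_gt5.
Let h5 : (5%:R : F) != 0 := @F5 p p_pr p_gt5.
Let h3 : (3%:R : F) != 0 := @F3 p p_pr p_gt5.

Lemma eqn_m1 (x : trip p) : eqn (m1 x) = eqn x.
Proof. by case: x => [[x1 x2] x3]; rewrite /eqn /m1 /=; ring. Qed.
Lemma eqn_m2 (x : trip p) : eqn (m2 x) = eqn x.
Proof. by case: x => [[x1 x2] x3]; rewrite /eqn /m2 /=; ring. Qed.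

Lemma m1_0 (x : trip p) : (m1 x == (0, 0, 0)) = (x == (0, 0, 0)).
Proof.
apply/eqP/eqP => [E|->]; last by rewrite /m1 /= mulr0 oppr0 addr0.
by rewrite -(m1K _ x) E /m1 /= mulr0 oppr0 addr0.
Qed.
Lemma m2_0 (x : trip p) : (m2 x == (0, 0, 0)) = (x == (0, 0, 0)).
Proof.
apply/eqP/eqP => [E|->]; last by rewrite /m2 /= mulr0 oppr0 addr0.
by rewrite -(m2K _ x) E /m2 /= mulr0 oppr0 addr0.
Qed.

Lemma sols1_cl x : x \in sols1 p -> (m1 x \in sols1 p) && (m2 x \in sols1 p).
Proof. by rewrite !inE eqn_m1 eqn_m2 => /andP [-> ->]. Qed.

Lemma sols0_cl x : x \in sols0 p -> (m1 x \in sols0 p) && (m2 x \in sols0 p).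
Proof. by rewrite !inE eqn_m1 eqn_m2 m1_0 m2_0 => /and3P [-> -> ->]. Qed.

Lemma sols1_nz x : x \in sols1 p -> x.1 != (0, 0).
Proof.
case: x => [[x1 x2] x3]; rewrite inE /eqn /= => /andP [E /eqP e3].
apply/negP => /eqP [e1 e2]; move: E; rewrite e1 e2 e3.
by rewrite expr0n !mulr0 !add0r subr0 expr1n oner_eq0.
Qed.

Lemma sols0_nz x : x \in sols0 p -> x.1 != (0, 0).
Proof.
case: x => [[x1 x2] x3]; rewrite inE /= => /and3P [_ /eqP e3 nz].
by apply: contra nz => /eqP [-> ->]; rewrite e3.
Qed.

Definition fmap (c : F) (z : F * F) : trip p := (((z.1 + 3%:R * z.2) / 2%:R, z.2), c).

Lemma fmap_inj c : injective (fmap c).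
Proof.
move=> [u1 v1] [u2 v2] E.
have E1 : (u1 + 3%:R * v1) / 2%:R = (u2 + 3%:R * v2) / 2%:R := congr1 (fun x => x.1.1) E.
have E2 : v1 = v2 := congr1 (fun x => x.1.2) E.
rewrite E2 in E1 *.
have -> : u1 = (u1 + 3%:R * v2) / 2%:R * 2%:R - 3%:R * v2 by field.
by rewrite E1; congr (_, _); field.
Qed.

Lemma eqn_fmap c z : eqn (fmap c z) = nrm p z / 4%:R + c ^+ 2.
Proof.
rewrite /eqn /fmap /nrm /=; field.
by rewrite -[4%:R]/((2 * 2)%N%:R) natrM mulf_neq0.
Qed.

Lemma fmap_surj (x : trip p) : x = fmap x.2 (2%:R * x.1.1 - 3%:R * x.1.2, x.1.2).
Proof.
case: x => [[x1 x2] x3]; rewrite /fmap /=; congr (_, _, _); field; exact: h2.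
Qed.

Lemma nrm_x (x : trip p) : nrm p (2%:R * x.1.1 - 3%:R * x.1.2, x.1.2) = 4%:R * (eqn x - x.2 ^+ 2).
Proof. by case: x => [[x1 x2] x3]; rewrite /nrm /eqn /=; ring. Qed.

Lemma h4 : (4%:R : F) != 0.
Proof. by rewrite -[4%:R]/((2 * 2)%N%:R) natrM mulf_neq0. Qed.

Lemma card_sols1 : #|sols1 p| = #|Nfib p 1|.
Proof.
rewrite -(@fib_eq p p_pr p_gt5 (- 4%:R)); last by rewrite oppr_eq0 h4.
have -> : sols1 p = fmap 1 @: Nfib p (- 4%:R).
  apply/setP => x; apply/idP/imsetP => [|[z]].
    rewrite inE => /andP [/eqP E /eqP e3].
    exists (2%:R * x.1.1 - 3%:R * x.1.2, x.1.2); last by rewrite {1}(fmap_surj x) e3.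
    by rewrite inE nrm_x E e3 expr1n sub0r mulrN1.
  rewrite inE => /eqP N ->; rewrite inE eqn_fmap N expr1n eqxx andbT.
  by apply/eqP; field; exact: h4.
by apply: card_imset; apply: fmap_inj.
Qed.

Lemma card_sols0 : #|sols0 p| = (#|Nfib p 0%R| - 1)%N.
Proof.
have -> : sols0 p = fmap 0 @: (Nfib p 0 :\ (0, 0)).
  apply/setP => x; apply/idP/imsetP => [|[z]].
    rewrite inE => /and3P [/eqP E /eqP e3 nz].
    exists (2%:R * x.1.1 - 3%:R * x.1.2, x.1.2); last by rewrite {1}(fmap_surj x) e3.
    rewrite !inE nrm_x E e3 expr0n subr0 mulr0 eqxx andbT.
    apply: contra nz; case: x e3 {E} => [[x1 x2] x3] /= -> /eqP E0.
    have a : 2%:R * x1 - 3%:R * x2 = 0 := congr1 fst E0.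
    have b : x2 = 0 := congr1 snd E0.
    move: a; rewrite b mulr0 subr0 => /eqP; rewrite mulf_eq0 (negPf h2) /= => /eqP ->.
    by [].
  rewrite !inE => /andP [nz /eqP N] ->; rewrite eqn_fmap N mul0r add0r expr0n !eqxx /=.
  apply: contra nz; case: z {N} => u v /eqP E.
  have E1 : (u + 3%:R * v) / 2%:R = 0 := congr1 (fun x => x.1.1) E.
  have E2 : v = 0 := congr1 (fun x => x.1.2) E.
  move: E1; rewrite E2 mulr0 addr0 => /eqP; rewrite mulf_eq0 invr_eq0 (negPf h2) orbF.
  by move/eqP ->.
rewrite card_imset; last exact: fmap_inj.
have h0 : ((0, 0) : F * F) \in Nfib p 0 by rewrite inE /nrm /= expr0n mulr0 subr0.
by rewrite [in RHS](cardsD1 (0, 0)) h0 /= add1n subn1.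
Qed.

Definition T5 : {set F} := [set t : F | 5%:R * t ^+ 2 == 1].

Lemma card_T5_split (s : F) : s ^+ 2 = 5%:R -> #|T5| = 2%N.
Proof.
move=> hs; have s0 : s != 0 by apply: contra h5 => /eqP s0; rewrite -hs s0 expr0n.
transitivity (if s^-1 == 0 then 1%N else 2%N); last by rewrite invr_eq0 (negPf s0).
rewrite -(@card_sqrt p p_pr p_gt5 (s^-1)).
apply: eq_card => t; rewrite !inE exprVn hs.
apply/eqP/eqP => [H|->]; last by rewrite mulfV.
by apply: (mulfI h5); rewrite H mulfV.
Qed.

Lemma card_T5_nonsplit : ~ (exists s : F, s ^+ 2 = 5%:R) -> #|T5| = 0%N.
Proof.
move=> ns; apply: eq_card0 => t; rewrite inE; apply/negP => /eqP E; case: ns.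
have t0 : t != 0 by apply: contra_eq_neq E => ->; rewrite expr0n mulr0 eq_sym oner_eq0.
exists t^-1; rewrite exprVn; apply: (mulIf (expf_neq0 2 t0)).
by rewrite mulVf ?expf_neq0 // E.
Qed.

Lemma fix1a : #|[set x in sols1 p | m1 x == x]| = #|T5|.
Proof.
pose g (t : F) : trip p := ((3%:R * t, 2%:R * t), 1).
have ginj : injective g.
  move=> t1 t2 E; have E2 : 2%:R * t1 = 2%:R * t2 := congr1 (fun x => x.1.2) E.
  exact: (mulfI h2 E2).
rewrite -(card_imset _ ginj); apply: eq_card => x.
apply/idP/imsetP => [|[t]].
  case: x => [[x1 x2] x3]; rewrite !inE /eqn /m1 /= => /andP [/andP [/eqP E /eqP e3] /eqP F1].
  have e1 : x1 = 3%:R * (x2 / 2%:R) :> F.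
    case: F1 => /eqP; rewrite -subr_eq0 => /eqP H.
    apply/eqP; rewrite -subr_eq0; apply/eqP.
    have : - (2%:R : F)^-1 * (- x1 + 3%:R * x2 - x1) = 0 by rewrite H mulr0.
    by move=> <-; field.
  exists (x2 / 2%:R); last by rewrite /g e1 e3; congr (_, _, _); field.
  rewrite inE; apply/eqP; rewrite -[RHS]subr0 -E e1 e3; field; exact: h2.
move=> Ht ->; have E : 5%:R * t ^+ 2 = 1 by move: Ht; rewrite /T5 inE => /eqP.
 rewrite !inE /eqn /m1 /g /= eqxx andbT.
apply/andP; split.
  apply/eqP; transitivity (1 - 5%:R * t ^+ 2 : F); first ring.
  by rewrite E subrr.
by apply/eqP; congr (_, _, _); ring.
Qed.

Lemma fix1b : #|[set x in sols1 p | m2 x == x]| = #|T5|.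
Proof.
pose g (t : F) : trip p := ((2%:R * t, 3%:R * t), 1).
have ginj : injective g.
  move=> t1 t2 E; have E2 : 2%:R * t1 = 2%:R * t2 := congr1 (fun x => x.1.1) E.
  exact: (mulfI h2 E2).
rewrite -(card_imset _ ginj); apply: eq_card => x.
apply/idP/imsetP => [|[t]].
  case: x => [[x1 x2] x3]; rewrite !inE /eqn /m2 /= => /andP [/andP [/eqP E /eqP e3] /eqP F1].
  have e2 : x2 = 3%:R * (x1 / 2%:R) :> F.
    case: F1 => /eqP; rewrite -subr_eq0 => /eqP H.
    apply/eqP; rewrite -subr_eq0; apply/eqP.
    have : - (2%:R : F)^-1 * (- x2 + 3%:R * x1 - x2) = 0 by rewrite H mulr0.
    by move=> <-; field.
  exists (x1 / 2%:R); last by rewrite /g e2 e3; congr (_, _, _); field.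
  rewrite inE; apply/eqP; rewrite -[RHS]subr0 -E e2 e3; field; exact: h2.
move=> Ht ->; have E : 5%:R * t ^+ 2 = 1 by move: Ht; rewrite /T5 inE => /eqP.
rewrite !inE /eqn /m2 /g /= eqxx andbT.
apply/andP; split.
  apply/eqP; transitivity (1 - 5%:R * t ^+ 2 : F); first ring.
  by rewrite E subrr.
by apply/eqP; congr (_, _, _); ring.
Qed.

Lemma fix0a : #|[set x in sols0 p | m1 x == x]| = 0%N.
Proof.
apply: eq_card0 => [[[x1 x2] x3]]; rewrite !inE /eqn /m1 /=.
apply/negP => /andP [/and3P [/eqP E /eqP e3 nz] /eqP F1].
have e1 : x1 = 3%:R * (x2 / 2%:R) :> F.
  case: F1 => /eqP; rewrite -subr_eq0 => /eqP H.
  apply/eqP; rewrite -subr_eq0; apply/eqP.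
  have : - (2%:R : F)^-1 * (- x1 + 3%:R * x2 - x1) = 0 by rewrite H mulr0.
  by move=> <-; field.
have : 5%:R * (x2 / 2%:R) ^+ 2 = 0 :> F.
  by rewrite -oppr0 -E e1 e3; field; exact: h2.
move/eqP; rewrite mulf_eq0 (negPf h5) /= expf_eq0 /= mulf_eq0 invr_eq0 (negPf h2) orbF.
move/eqP => x20; move: nz; rewrite e1 x20 e3 mul0r mulr0 eqxx.
by [].
Qed.

Lemma fix0b : #|[set x in sols0 p | m2 x == x]| = 0%N.
Proof.
apply: eq_card0 => [[[x1 x2] x3]]; rewrite !inE /eqn /m2 /=.
apply/negP => /andP [/and3P [/eqP E /eqP e3 nz] /eqP F1].
have e2 : x2 = 3%:R * (x1 / 2%:R) :> F.
  case: F1 => /eqP; rewrite -subr_eq0 => /eqP H.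
  apply/eqP; rewrite -subr_eq0; apply/eqP.
  have : - (2%:R : F)^-1 * (- x2 + 3%:R * x1 - x2) = 0 by rewrite H mulr0.
  by move=> <-; field.
have : 5%:R * (x1 / 2%:R) ^+ 2 = 0 :> F.
  by rewrite -oppr0 -E e2 e3; field; exact: h2.
move/eqP; rewrite mulf_eq0 (negPf h5) /= expf_eq0 /= mulf_eq0 invr_eq0 (negPf h2) orbF.
move/eqP => x10; move: nz; rewrite e2 x10 e3 mul0r mulr0 eqxx.
by [].
Qed.

End Sets.

Theorem proposition5p1 (p : nat) (p_pr : prime p) (p_gt5 : (5 < p)%N)
  (L : finFieldType) (charL : p \in [pchar L]) (cardL : #|L| = (p ^ 2)%N)
  (r : L) (hr : r ^+ 2 = 5%:R)
  (n : nat) (ord_lambda : n.-primitive_root ((7%:R + 3%:R * r) / 2%:R)) :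
  ((exists s : 'F_p, s ^+ 2 = 5%:R) ->
     (#|orbits (sols1 p)|%:R : rat) = 1 / 2 * ((p - 1)%:R / n%:R) + 1
     /\ (#|orbits (sols0 p)|%:R : rat) = (p - 1)%:R / n%:R)
  /\
  (~ (exists s : 'F_p, s ^+ 2 = 5%:R) ->
     (#|orbits (sols1 p)|%:R : rat) = 1 / 2 * ((p + 1)%:R / n%:R)
     /\ #|orbits (sols0 p)| = 0%N).
Proof.
have n_gt0 := prim_order_gt0 ord_lambda.
have Mp : forall x : trip p, x.1 != (0, 0) -> forall k, (iter k (Mf p) x == x) = (n %| k)%N.
  by move=> x nz k; apply: (@Mper p p_pr p_gt5 L charL r hr n ord_lambda x k nz).
have H1 := @orbits_count p n n_gt0 Mp (sols1 p) (@sols1_cl p) (@sols1_nz p).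
have H0 := @orbits_count p n n_gt0 Mp (sols0 p) (@sols0_cl p) (@sols0_nz p).
rewrite (@card_sols1 p p_pr p_gt5) (@fix1a p p_pr p_gt5) (@fix1b p p_pr p_gt5) in H1.
rewrite (@card_sols0 p p_pr p_gt5) (@fix0a p p_pr p_gt5) (@fix0b p p_pr p_gt5) in H0.
have nz : (n%:R : rat) != 0 by rewrite Num.Theory.pnatr_eq0 -lt0n.
have p1 : (1 < p)%N by apply: prime_gt1.
move: H1 H0; set k1 := #|orbits (sols1 p)|; set k0 := #|orbits (sols0 p)| => H1 H0.
split=> [[s hs]|ns].
  rewrite (@N1_split p p_pr p_gt5 _ hs) (@card_T5_split p p_pr p_gt5 _ hs) in H1.
  rewrite (@N0_split p p_pr p_gt5 _ hs) in H0.
  have E0 : (2 * p - 1 - 1 = 2 * (p - 1))%N by lia.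
  rewrite E0 in H0.
  move/(congr1 (fun m : nat => (m%:R : rat))): H1; rewrite !natrD !natrM => H1.
  move/(congr1 (fun m : nat => (m%:R : rat))): H0; rewrite !natrD !natrM => H0.
  split.
    have -> : (k1%:R : rat) = k1%:R * (4%:R * n%:R) / (4%:R * n%:R) by field.
    by rewrite H1; field.
  have -> : (k0%:R : rat) = k0%:R * (4%:R * n%:R) / (4%:R * n%:R) by field.
  by rewrite H0; field.
rewrite (@N1_nonsplit p p_pr p_gt5 ns) (@card_T5_nonsplit p ns) in H1.
split.
  move/(congr1 (fun m : nat => (m%:R : rat))): H1; rewrite !natrD !natrM => H1.
  have -> : (k1%:R : rat) = k1%:R * (4%:R * n%:R) / (4%:R * n%:R) by field.
  by rewrite H1 -addn1 natrD; field.
rewrite /k0 (@N0_nonsplit p ns) /= in H0 *.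
have -> : sols0 p = set0.
  by apply/eqP; rewrite -cards_eq0 (@card_sols0 p p_pr p_gt5) (@N0_nonsplit p ns).
by rewrite /orbits imset0 cards0.
Qed.
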